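(* Let $G$ be a subgroup of $O_d(\mathbb R)$, let $\Omega$ be a finite set and let \[\mathcal M=\{\boldsymbol\xi=(\xi_\omega)_{\omega\in\Omega}\in(\mathbb R^d)^\Omega:\ \text{the }\xi_\omega\text{ are pairwise distinct and }\boldsymbol\xi\text{ is }G\text{-invariant}\}.\] Then $\mathcal M$ is a submanifold of $(\mathbb R^d)^\Omega$.
   Context: A family $\boldsymbol\xi=(\xi_\omega)_{\omega\in\Omega}\in(\mathbb R^d)^\Omega$ is $G$-invariant if for every $R\in G$ there is a map $\chi(R):\Omega\to\Omega$ with $R\xi_\omega=\xi_{\chi(R)\omega}$ for all $\omega\in\Omega$. *)

(* Defs.v *)
From HB Require Import structures.
From mathcomp Require Import all_boot all_order all_algebra.
From mathcomp Require Import all_classical all_reals all_analysis.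
Set Implicit Arguments. Unset Strict Implicit. Unset Printing Implicit Defensive.
Import Order.TTheory GRing.Theory Num.Theory.
Import numFieldNormedType.Exports.
Local Open Scope classical_set_scope.
Local Open Scope ring_scope.

Definition orthogonal_subgroup (R : realType) (d : nat) (G : set 'M[R]_d) :=
  [/\ G 1%:M,
      (forall A B, G A -> G B -> G (A *m B)),
      (forall A, G A -> G (invmx A)) &
      (forall A, G A -> A *m A^T = 1%:M)].

(* A point of (R^d)^Omega is stored as a matrix with #|Omega| rows; the
   vector xi_omega is the row of index (enum_rank omega), viewed as a
   column vector via transposition. *)
Definition xi_at (R : realType) (Omega : finType) (d : nat)
  (xi : 'M[R]_(#|Omega|, d)) (w : Omega) : 'cV[R]_d :=
  (row (enum_rank w) xi)^T.

Definition G_invariant (R : realType) (Omega : finType) (d : nat)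
  (G : set 'M[R]_d) (xi : 'M[R]_(#|Omega|, d)) :=
  forall A, G A -> exists chi : Omega -> Omega,
    forall w, A *m xi_at xi w = xi_at xi (chi w).

Definition calM (R : realType) (Omega : finType) (d : nat)
  (G : set 'M[R]_d) : set 'M[R]_(#|Omega|, d) :=
  [set xi | (forall w w', w <> w' -> xi_at xi w <> xi_at xi w')
            /\ G_invariant G xi].

Fixpoint iter_D (R : realType) (V : normedModType R)
  (vs : seq V) (f : V -> V) : V -> V :=
  match vs with
  | [::] => f
  | v :: vs' => fun x => 'D_v (iter_D vs' f) x
  end.

Definition smooth_on (R : realType) (V : normedModType R)
  (U : set V) (f : V -> V) :=
  (forall vs v x, U x -> derivable (iter_D vs f) x v) /\
  (forall vs x, U x -> {for x, continuous (iter_D vs f)}).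

Definition diffeo_on (R : realType) (V : normedModType R)
  (U W : set V) (phi psi : V -> V) :=
  [/\ open U, open W, smooth_on U phi & smooth_on W psi] /\
  [/\ phi @` U = W,
      (forall x, U x -> psi (phi x) = x) &
      (forall y, W y -> phi (psi y) = y)].

(* Embedded C^infinity submanifold of the finite-dimensional space of
   matrices: every point of M has an open neighbourhood U and a
   diffeomorphism of U onto an open set W straightening M /\ U onto
   W /\ L for a linear subspace L (dimension may vary with the point). *)
Definition is_submanifold (R : realType) (m n : nat)
  (M : set 'M[R]_(m, n)) :=
  forall p, M p -> exists (U W : set 'M[R]_(m, n)) (phi psi : 'M[R]_(m, n) -> 'M[R]_(m, n))
    (L : {vspace 'M[R]_(m, n)}),
    [/\ U p, diffeo_on U W phi psi &
        phi @` (M `&` U) = W `&` [set y | y \in L]].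

(* Main.v *)
Require Import Defs.
From HB Require Import structures.
From mathcomp Require Import all_boot all_order all_algebra.
From mathcomp Require Import all_classical all_reals all_analysis.
From mathcomp Require Import lra.
Set Implicit Arguments. Unset Strict Implicit.
Import Order.TTheory GRing.Theory Num.Theory.
Import numFieldNormedType.Exports.
Local Open Scope classical_set_scope.
Local Open Scope ring_scope.
Lemma span_closed (K : fieldType) (vT : vectType K) (S : set vT) (s : seq vT) :
  S 0 -> (forall x y, S x -> S y -> S (x + y)) -> (forall a x, S x -> S (a *: x)) ->
  (forall x, x \in s -> S x) -> forall y, y \in (span s) -> S y.
Proof.
move=> S0 SD SZ Ss y /(@coord_span _ _ _ (in_tuple s)) ->.
apply: (big_ind S) => // i _; apply: SZ; apply: Ss.
by rewrite mem_nth // size_tuple.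
Qed.

Lemma vspace_of_set (K : fieldType) (vT : vectType K) (S : set vT) :
  S 0 -> (forall x y, S x -> S y -> S (x + y)) -> (forall a x, S x -> S (a *: x)) ->
  exists L : {vspace vT}, forall y, y \in L <-> S y.
Proof.
move=> S0 SD SZ.
pose P := fun n => `[< exists s : seq vT, (forall x, x \in s -> S x) /\ \dim (span s) = n >].
have exP : exists n, P n by exists 0%N; apply/asboolP; exists [::]; split => //; rewrite span_nil dimv0.
have ubP : forall n, P n -> (n <= \dim (fullv : {vspace vT}))%N.
  by move=> n /asboolP [s [_ <-]]; apply: dimvS; apply: subvf.
case: (ex_maxnP exP ubP) => n /asboolP [s [Ss Hn]] Hmax.
exists (span s) => y; split; first exact: span_closed.
move=> Sy.
have Hs' : ((span s) <= (span (y :: s)))%VS by rewrite span_cons addvSr.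
have : (\dim (span (y :: s)) <= n)%N.
  apply: Hmax; apply/asboolP; exists (y :: s); split => //.
  by move=> x; rewrite inE => /orP [/eqP ->|/Ss].
rewrite -Hn => Hle.
have /eqP -> : (span s) == (span (y :: s)).
  by rewrite -(dimv_leqif_eq Hs').2 eqn_leq Hle dimvS.
by apply: memv_span; rewrite inE eqxx.
Qed.
Lemma iter_D_id (R : realType) (V : normedModType R) (vs : seq V) :
  iter_D vs id = id \/ exists c : V, iter_D vs id = cst c.
Proof.
elim: vs => [|v vs [IH|[c IH]]] /=; first by left.
  by right; exists v; apply/funext => x; rewrite IH derive_id.
by right; exists 0; apply/funext => x; rewrite IH derive_cst.
Qed.

Lemma smooth_id (R : realType) (V : normedModType R) (U : set V) :
  smooth_on U id.
Proof.
split=> vs; case: (iter_D_id vs) => [->|[c ->]].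
- by move=> v x _; apply: derivable_id.
- by move=> v x _; apply: derivable_cst.
- by move=> x _; exact: cvg_id.  
- by move=> x _; apply: cst_continuous.
Qed.

Lemma mx_entry_le (R : realType) m n (M : 'M[R]_(m, n)) i j : `|M i j| <= `|M|.
Proof.
have -> : `|M| = mx_norm M by []. rewrite mx_normrE.
exact: (le_bigmax _ (fun ij : 'I_m * 'I_n => `|M ij.1 ij.2|) (i, j)).
Qed.

Lemma mx_le_entry (R : realType) m n (M : 'M[R]_(m, n)) c :
  0 <= c -> (forall i j, `|M i j| <= c) -> `|M| <= c.
Proof.
move=> c0 H; have -> : `|M| = mx_norm M by []. rewrite mx_normrE.
by apply: bigmax_le => // ij _; apply: H.
Qed.

Lemma orth_entry (R : realType) d (A : 'M[R]_d) i j :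
  A *m A^T = 1%:M -> `|A i j| <= 1.
Proof.
move=> HA.
have H1 : \sum_k A i k ^+ 2 = 1.
  have := congr1 (fun M : 'M[R]_d => M i i) HA; rewrite !mxE eqxx /= => H; rewrite -[RHS]H.
  by apply: eq_bigr => k _; rewrite !mxE expr2.
have H2 : A i j ^+ 2 <= 1.
  rewrite -H1 (bigD1 j) //= lerDl; apply: sumr_ge0 => k _; exact: sqr_ge0.
by rewrite -(@expr_le1 _ 2) // real_normK // num_real.
Qed.

Lemma mul_bound (R : realType) d (A : 'M[R]_d) (v : 'cV[R]_d) :
  (forall i j, `|A i j| <= 1) -> `|A *m v| <= d%:R * `|v|.
Proof.
move=> HA; apply: mx_le_entry; first by rewrite mulr_ge0.
move=> i j; rewrite mxE.
apply: le_trans (ler_norm_sum _ _ _) _.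
have -> : d%:R * `|v| = \sum_(k < d) `|v| by rewrite sumr_const card_ord mulr_natl.
apply: ler_sum => k _; rewrite normrM -[X in _ <= X]mul1r.
apply: ler_pM => //.
exact: mx_entry_le.
Qed.

Lemma xi_atE (R : realType) (Omega : finType) d (M : 'M[R]_(#|Omega|, d)) w i j :
  xi_at M w i j = M (enum_rank w) i.
Proof. by rewrite /xi_at !mxE. Qed.

Lemma xi_atB (R : realType) (Omega : finType) d (x y : 'M[R]_(#|Omega|, d)) w :
  xi_at (x - y) w = xi_at x w - xi_at y w.
Proof. by apply/matrixP => i j; rewrite !mxE. Qed.

Lemma xi_atD (R : realType) (Omega : finType) d (x y : 'M[R]_(#|Omega|, d)) w :
  xi_at (x + y) w = xi_at x w + xi_at y w.
Proof. by apply/matrixP => i j; rewrite !mxE. Qed.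

Lemma xi_atZ (R : realType) (Omega : finType) d a (x : 'M[R]_(#|Omega|, d)) w :
  xi_at (a *: x) w = a *: xi_at x w.
Proof. by apply/matrixP => i j; rewrite !mxE. Qed.

Lemma xi_at0 (R : realType) (Omega : finType) d w :
  xi_at (0 : 'M[R]_(#|Omega|, d)) w = 0.
Proof. by apply/matrixP => i j; rewrite !mxE. Qed.

Lemma xi_at_dist (R : realType) (Omega : finType) d (x y : 'M[R]_(#|Omega|, d)) w :
  `|xi_at x w - xi_at y w| <= `|x - y|.
Proof.
apply: mx_le_entry => // i j.
by rewrite -xi_atB xi_atE; apply: mx_entry_le.
Qed.

Theorem lemma2p2 (R : realType) (d : nat) (G : set 'M[R]_d) (Omega : finType) :
  orthogonal_subgroup G -> is_submanifold (@calM R Omega d G).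
Proof.
move=> [G1 GM GV GO] p [pdist pinv].
pose P := xi_at p.
pose delta := \big[Order.min/1]_(ww : Omega * Omega | ww.1 != ww.2) `|P ww.1 - P ww.2|.
have delta_gt0 : 0 < delta.
  apply: lt_bigmin => // ww /eqP ne; rewrite normr_gt0 subr_eq0; apply/eqP.
  exact: pdist.
have delta_le : forall w w', w != w' -> delta <= `|P w - P w'|.
  move=> w w' ne.
  exact: (bigmin_le_cond _ (fun ww : Omega * Omega => `|P ww.1 - P ww.2|) (j := (w, w')) ne).
pose e := delta / (d%:R + 2).
have d2 : 0 < d%:R + 2 :> R by rewrite ltr_wpDl.
have e_gt0 : 0 < e by rewrite divr_gt0.
have eE : e * (d%:R + 2) = delta by rewrite /e divfK // gt_eqF.
have ed : 0 <= e * d%:R by rewrite mulr_ge0 // ltW.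
pose Lset := fun y : 'M[R]_(#|Omega|, d) => forall A, G A -> forall chi : Omega -> Omega,
  (forall w, A *m P w = P (chi w)) -> forall w, A *m xi_at y w = xi_at y (chi w).
have [Lv HL] : exists Lv : {vspace 'M[R]_(#|Omega|, d)}, forall y, y \in Lv <-> Lset y.
  apply: vspace_of_set.
  - by move=> A _ chi _ w; rewrite !xi_at0 mulmx0.
  - move=> x y Hx Hy A GA chi Hchi w.
    by rewrite !xi_atD mulmxDr (Hx A GA chi Hchi) (Hy A GA chi Hchi).
  - move=> a x Hx A GA chi Hchi w.
    by rewrite !xi_atZ -scalemxAr (Hx A GA chi Hchi).
have ballE : forall y, ball p e y <-> `|p - y| < e.
  by move=> y; rewrite -ball_normE.
exists (ball p e), (ball p e), id, id, Lv; split.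
- exact: ballxx.
- split; split => //; try exact: ball_open; try exact: smooth_id.
  by rewrite image_id.
rewrite image_id; apply/seteqP; split => y.
- move=> [[ydist yinv] /ballE Uy]; split; first by apply/ballE.
  apply/HL => A GA chi Hchi w.
  have [chi' Hchi'] := yinv A GA.
  rewrite Hchi'; congr xi_at.
  case: (eqVneq (chi' w) (chi w)) => // ne; exfalso.
  have := delta_le _ _ ne.
  have h1 := xi_at_dist p y (chi' w).
  have h2 : `|xi_at y (chi' w) - P (chi w)| <= d%:R * `|p - y|.
    rewrite -Hchi' -Hchi -mulmxBr.
    apply: le_trans (mul_bound _ _) _; first by move=> i j; apply: orth_entry; apply: GO.
    rewrite ler_wpM2l //.
    by rewrite distrC; apply: xi_at_dist.
  have h3 := ler_distD (xi_at y (chi' w)) (P (chi' w)) (P (chi w)).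
  have h4 : d%:R * `|p - y| <= d%:R * e by rewrite ler_wpM2l // ltW.
  move=> h5.
  have : delta < delta; last by rewrite ltxx.
  rewrite /P in h1 h2 h3 h5 *.
  nra.
- move=> [/ballE Uy yL]; split; last by apply/ballE.
  split.
  + move=> w w' ne heq.
    have ne' : w != w' by apply/eqP.
    have := delta_le _ _ ne'.
    have h1 := xi_at_dist p y w.
    have h2 := xi_at_dist p y w'.
    have h3 := ler_distD (xi_at y w) (P w) (P w').
    rewrite heq in h1 h3.
    rewrite distrC in h2.
    move=> h5.
    have : delta < delta; last by rewrite ltxx.
    rewrite /P in h1 h2 h3 h5 *.
    nra.
  + move=> A GA; have [chi Hchi] := pinv A GA.
    by exists chi; apply: (proj1 (HL y) yL A GA chi Hchi).
Qed.
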